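(* For every integer $k\ge 2$, every finite graph $G$ with maximum degree $\Delta\ge 1$ has a star-$k$ coloring with at most $C_{2k-2}\,k^{\frac{1}{2k-2}}\,\Delta^{\frac{2k-1}{2k-2}}+\Delta$ colors, where $C_\ell=\ell\,(\ell-1)^{\frac1\ell-1}$.
   Context: A star-$k$ coloring of a graph is a proper vertex-coloring such that every path on $2k$ vertices contains at least three colors. *)

(* Defs.v *)
From mathcomp Require Import all_boot.
From Stdlib Require Import Reals.
Set Implicit Arguments. Unset Strict Implicit. Unset Printing Implicit Defensive.

(* A finite simple graph is a symmetric irreflexive relation e on a finType T. *)

Definition deg (T : finType) (e : rel T) (v : T) : nat := #|[pred u | e v u]|.

Definition maxdeg (T : finType) (e : rel T) : nat := \max_(v : T) deg e v.

Definition proper_coloring (T : finType) (e : rel T) (C : Type) (c : T -> C) : Prop :=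
  forall u v, e u v -> c u <> c v.

Definition star_k_coloring (T : finType) (e : rel T) (k : nat) (m : nat)
    (c : T -> 'I_m) : Prop :=
  proper_coloring e c /\
  forall (x : T) (s : seq T),
    size (x :: s) = (2 * k)%N -> uniq (x :: s) -> path e x s ->
    (3 <= size (undup (map c (x :: s))))%N.

Definition Cconst (l : nat) : R :=
  (INR l * Rpower (INR l - 1) (/ INR l - 1))%R.

Definition star_bound (k D : nat) : R :=
  (Cconst (2 * k - 2) * Rpower (INR k) (/ INR (2 * k - 2))
     * Rpower (INR D) (INR (2 * k - 1) / INR (2 * k - 2)) + INR D)%R.

(* Main.v *)
Require Import Defs.
From mathcomp Require Import all_boot.
From Stdlib Require Import Reals.
From mathcomp Require Import zify.
From Stdlib Require Import Lra Psatz.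
From Stdlib Require ZArith.
Set Implicit Arguments. Unset Strict Implicit. Unset Printing Implicit Defensive.

Lemma card_bigcup_le (I T : finType) (P : pred I) (F : I -> {set T}) :
  #|\bigcup_(i | P i) F i| <= \sum_(i | P i) #|F i|.
Proof.
apply: (big_ind2 (fun (U : {set T}) n => #|U| <= n)); first by rewrite cards0.
  move=> U1 n1 U2 n2 h1 h2; apply: leq_trans (leq_card_setU U1 U2) _.
  exact: leq_add.
by [].
Qed.

Lemma half_pick k i : 1 < k -> i < 2 * k - 2 -> exists d, 2 * k - 2 <= i + 2 * d < 2 * k.
Proof.
move=> k2 ix; exists ((2 * k - 1 - i) %/ 2).
have h1 := divn_eq (2 * k - 1 - i) 2; have h2 := ltn_pmod (2 * k - 1 - i) (isT : 0 < 2).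
move: h1 h2; generalize ((2 * k - 1 - i) %/ 2) ((2 * k - 1 - i) %% 2) => q rr h1 h2.
lia.
Qed.

Section Q.
Variables (T : finType) (e : rel T).
Hypothesis esym : symmetric e.

Definition upath (s : seq T) := uniq s && (if s is x :: s' then path e x s' else true).

Lemma upath_rev s : upath (rev s) = upath s.
Proof.
rewrite /upath rev_uniq; case: s => [|x s] //=.
rewrite lastI rev_rcons /=; congr (_ && _).
rewrite rev_path; apply: eq_path => a b; exact: esym.
Qed.

Lemma deg_le v : deg e v <= maxdeg e.
Proof. rewrite /maxdeg; apply: (@leq_bigmax _ (fun v => deg e v) v). Qed.

Definition Qset n j (v : T) := [set t : n.-tuple T | upath t && (nth v t j == v)].

Lemma Q_rec n j v : j < n ->
  #|Qset n.+1 j.+1 v| <= (if 1 < n then (maxdeg e).-1 else maxdeg e) * #|Qset n j v|.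
Proof.
move=> jn.
pose P := [set p : n.-tuple T * T | (p.1 \in Qset n j v) && (e p.2 (head v p.1) && (p.2 \notin (val p.1)))].
pose ct (p : n.-tuple T * T) : n.+1.-tuple T := [tuple of p.2 :: p.1].
have sub : Qset n.+1 j.+1 v \subset [set ct p | p in P].
  apply/subsetP => t; rewrite inE => /andP[ut nt].
  apply/imsetP; exists (behead_tuple t, thead t); last first.
    by apply: val_inj; rewrite /= [in LHS](tuple_eta t).
  rewrite inE /= inE.
  have tE : (t : seq T) = thead t :: behead t by rewrite [in LHS](tuple_eta t).
  have sb : size (behead t) = n by rewrite size_behead size_tuple.
  move: ut nt; rewrite tE /= /upath /=.
  change (tval (behead_tuple t)) with (behead t).
  move: (thead t) (behead t) sb => x [|y s] /=; first by move=> h; exfalso; lia.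
  move=> _ /andP[/andP[nx us] /andP[exy ps]] ->; rewrite us ps exy.
  by rewrite nx.
apply: (leq_trans (subset_leq_card sub)); apply: (leq_trans (leq_imset_card _ _)).
have -> : #|P| = \sum_(t in Qset n j v) #|[set x | e x (head v t) && (x \notin val t)]|.
  transitivity (\sum_(t in Qset n j v) \sum_(x | e x (head v t) && (x \notin val t)) 1).
    rewrite pair_big_dep sum1dep_card; apply: eq_card => p; by rewrite !inE.
  by apply: eq_bigr => t _; rewrite sum1dep_card.
rewrite mulnC -sum_nat_const; apply: leq_sum => t; rewrite inE => /andP[ut _].
case: t ut => /= t0 /eqP st0 ut.
set h := head v t0.
have degh : forall h, #|[set x | e h x]| <= maxdeg e by move=> ?; rewrite cardsE; exact: deg_le.
case: ifP => n1.
- move: ut st0.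
  rewrite /h; clear h; case: t0 => [|a [|b s]] //=; try by move=> _ h'; move: n1; rewrite -h'.
  move=> + _.
  move=> /andP[/andP[_ /andP[nb _]] /andP[eab _]].
  have sub2 : [set x | e x a && (x \notin [:: a, b & s])] \subset [set x | e a x] :\ b.
    apply/subsetP => x; rewrite !inE => /andP[exa]; rewrite !negb_or => /andP[_ /andP[xb _]].
    by rewrite xb esym.
  apply: (leq_trans (subset_leq_card sub2)).
  have bin : b \in [set x | e a x] by rewrite inE.
  have hh := cardsD1 b [set x | e a x]; rewrite bin in hh.
  move: (degh a); rewrite hh; lia.
- apply: leq_trans (degh h) ; apply: subset_leq_card; apply/subsetP => x; rewrite !inE.
  by case/andP; rewrite esym.
Qed.

Lemma Q_revle n j v : j < n -> #|Qset n j v| <= #|Qset n (n - j.+1) v|.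
Proof.
move=> jn.
rewrite -(card_in_imset (f := fun t : n.-tuple T => rev_tuple t)); last first.
  by move=> t1 t2 _ _ /(congr1 val) /= /(congr1 rev); rewrite !revK => /val_inj.
apply: subset_leq_card; apply/subsetP => _ /imsetP[t + ->].
rewrite !inE /= => /andP[ut /eqP nt]; apply/andP; split.
  by rewrite upath_rev.
rewrite nth_rev size_tuple; last lia.
by rewrite -[X in _ == X]nt; apply/eqP; congr nth; lia.
Qed.

Definition Bn n := if n <= 1 then 1 else maxdeg e * (maxdeg e).-1 ^ (n - 2).

Lemma Q_bound n : 0 < n -> forall j v, j < n -> #|Qset n j v| <= Bn n.
Proof.
elim: n => // n IH _ j v jn.
have pos : forall j, 0 < j < n.+1 -> #|Qset n.+1 j v| <= Bn n.+1.
  move=> [|j'] //= j'n; have {}j'n : j' < n by [].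
  apply: leq_trans (Q_rec v j'n) _.
  have := IH (leq_ltn_trans (leq0n j') j'n) j' v j'n.
  rewrite /Bn; case: n {IH jn} j'n => [|[|n']] j'n.
  - by [].
  - by move=> h /=; apply: leq_mul.
  - rewrite /= => h; apply: leq_trans (leq_mul (leqnn _) h) _; rewrite mulnCA.
    by have -> : n'.+2 - 2 = n' by lia.
case: j jn => [|j] jn; last by apply: pos.
case: n IH pos jn => [|n] IH pos jn.
  apply: leq_trans (_ : #|[set [tuple v]]| <= 1); last by rewrite cards1.
  apply: subset_leq_card; apply/subsetP => t; rewrite !inE.
  case: t => [[|x [|? ?]]] //= st /eqP ->; apply/eqP; exact: val_inj.
apply: leq_trans (Q_revle v jn) _; apply: pos; lia.
Qed.
End Q.

Section Col.
Variables (T : finType) (e : rel T).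
Hypothesis esym : symmetric e.
Hypothesis eirr : irreflexive e.
Variables (k m : nat).
Hypothesis k2 : 1 < k.
Variable x0 : 'I_m.

Local Notation col := {ffun T -> 'I_m}.
Local Notation D := (maxdeg e).

Definition bicol (f : col) (s : seq T) :=
  [exists a : 'I_m, exists b : 'I_m, all (fun x => (f x == a) || (f x == b)) s].
Definition proper_on (S : {set T}) (f : col) :=
  [forall u in S, forall w in S, e u w ==> (f u != f w)].
Definition valid (S : {set T}) (f : col) :=
  proper_on S f &&
  [forall t : (2*k).-tuple T, (upath e t && all (fun x => x \in S) t) ==> ~~ bicol f t].
Definition good S := [set f : col | valid S f && [forall x, (x \notin S) ==> (f x == x0)]].
Definition N S := #|good S|.

Lemma proper_onP (S : {set T}) (f : col) : reflect (forall u w, u \in S -> w \in S -> e u w -> f u != f w)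
   (proper_on S f).
Proof.
apply: (iffP forallP) => [h u w uS wS euw | h u].
  by have := h u; rewrite uS /= => /forallP /(_ w); rewrite wS euw.
by apply/implyP => uS; apply/forallP => w; apply/implyP => wS; apply/implyP; apply: h.
Qed.

Lemma bicol_eq (f g : col) s : {in s, f =1 g} -> bicol f s -> bicol g s.
Proof.
move=> fg /existsP[a /existsP[b /allP h]]; apply/existsP; exists a; apply/existsP; exists b.
by apply/allP => x xs; rewrite -fg // h.
Qed.

Lemma valid_imp (S : {set T}) (f g : col) : {in S, f =1 g} -> valid S f -> valid S g.
Proof.
move=> fg /andP[/proper_onP pf /forallP vf]; apply/andP; split.
  by apply/proper_onP => u w uS wS euw; rewrite -!fg //; apply: pf.
apply/forallP => t; apply/implyP => /andP[ut tS]; have := vf t; rewrite ut tS /=.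
apply: contra; apply: bicol_eq => x xt; symmetry; apply: fg; exact: (allP tS).
Qed.

Lemma valid_sub (A B : {set T}) (f : col) : A \subset B -> valid B f -> valid A f.
Proof.
move=> AB /andP[/proper_onP pf /forallP vf]; apply/andP; split.
  apply/proper_onP => u w uS wS euw; apply: pf => //; exact: (subsetP AB).
apply/forallP => t; apply/implyP => /andP[ut tS]; have := vf t; rewrite ut /=.
have -> // : all (fun x => x \in B) t.
by apply/allP => x xt; apply: (subsetP AB); exact: (allP tS).
Qed.

Lemma good_out (S : {set T}) (f : col) x : f \in good S -> x \notin S -> f x = x0.
Proof. by rewrite inE => /andP[_ /forallP /(_ x) /implyP h] /h /eqP. Qed.

Lemma good_valid (S : {set T}) (f : col) : f \in good S -> valid S f.
Proof. by rewrite inE => /andP[]. Qed.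

Lemma N0 : N set0 = 1.
Proof.
rewrite /N -(cards1 ([ffun=> x0] : col)); apply: eq_card => f; rewrite !inE.
apply/idP/idP.
  move=> /andP[_ /forallP h]; apply/eqP/ffunP => x; rewrite ffunE.
  by have := h x; rewrite inE /= => /eqP.
move=> /eqP ->; apply/andP; split.
  apply/andP; split; first by apply/proper_onP => u w; rewrite inE.
  apply/forallP => t; apply/implyP => /andP[_].
  case: t => [[|x s]] //= hs; first by exfalso; move/eqP: hs; lia.
  by rewrite inE.
by apply/forallP => x; rewrite ffunE eqxx implybT.
Qed.

Definition ext (g : col) v c : col := [ffun x => if x == v then c else g x].

Variables (S : {set T}) (v : T).
Hypothesis vS : v \in S.
Local Notation S' := (S :\ v).

Definition NC (g : col) := [set g u | u in [set u in S' | e v u]].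

Lemma card_NC g : #|NC g| <= D.
Proof.
apply: leq_trans (leq_imset_card _ _) _; apply: leq_trans (deg_le e v).
by rewrite /deg; apply: subset_leq_card; apply/subsetP => u; rewrite !inE => /andP[].
Qed.

Definition E := [set p : col * 'I_m | (p.1 \in good S') && (p.2 \notin NC p.1)].

Lemma cardE : (m - D) * N S' <= #|E|.
Proof.
have -> : #|E| = \sum_(g in good S') #|~: NC g|.
  transitivity (\sum_(g in good S') \sum_(c | c \in ~: NC g) 1).
    rewrite pair_big_dep sum1dep_card; apply: eq_card => p; by rewrite !inE.
  by apply: eq_bigr => g _; rewrite sum1dep_card; apply: eq_card => c; rewrite !inE.
rewrite mulnC -sum_nat_const; apply: leq_sum => g _.
have := cardsC (NC g); rewrite card_ord; have := card_NC g; lia.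
Qed.

Lemma ext_proper p : p \in E -> proper_on S (ext p.1 v p.2).
Proof.
case: p => g c; rewrite inE /= => /andP[gg cn].
have pg := proper_onP _ _ (proj1 (andP (good_valid gg))).
have key : forall w, w \in S -> e v w -> c != g w.
  move=> w wS ew; apply: contraNneq cn => ->; apply/imsetP; exists w => //.
  rewrite !inE ew andbT wS andbT; apply: contraTneq ew => ->; by rewrite eirr.
apply/proper_onP => u w uS wS euw; rewrite !ffunE.
case: (eqVneq u v) => [uv|uv]; case: (eqVneq w v) => [wv|wv].
- by move: euw; rewrite uv wv eirr.
- by subst u; apply: key.
- by subst w; rewrite eq_sym; apply: key => //; rewrite esym.
- by apply: pg => //; rewrite !inE ?uv ?wv.
Qed.

Lemma ext_on p : p \in E -> {in S', ext p.1 v p.2 =1 p.1}.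
Proof. by move=> _ x; rewrite !inE ffunE => /andP[/negbTE -> _]. Qed.

Lemma ext_inj : {in E &, injective (fun p => ext p.1 v p.2)}.
Proof.
move=> [g1 c1] [g2 c2]; rewrite inE /= => /andP[g1g _]; rewrite inE /= => /andP[g2g _] h.
have vS' : v \notin S' by rewrite !inE eqxx.
congr pair; last by have := congr1 (fun f : col => f v) h; rewrite !ffunE eqxx.
apply/ffunP => x; case: (eqVneq x v) => [->|xv].
  by rewrite (good_out g1g vS') (good_out g2g vS').
by have := congr1 (fun f : col => f x) h; rewrite !ffunE (negbTE xv).
Qed.


Lemma alt2 (f : col) (s : seq T) y : bicol f s ->
  (forall i, i.+1 < size s -> f (nth y s i) != f (nth y s i.+1)) ->
  forall i, i.+2 < size s -> f (nth y s i) = f (nth y s i.+2).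
Proof.
move=> /existsP[a /existsP[b /allP h]] hd i hi.
have m0 := h _ (mem_nth y (ltnW (ltnW hi))).
have m1 := h _ (mem_nth y (ltnW hi)).
have m2 := h _ (mem_nth y hi).
have d1 := hd i (ltnW hi).
have d2 := hd i.+1 hi.
move: (f (nth y s i)) (f (nth y s i.+1)) (f (nth y s i.+2)) m0 m1 m2 d1 d2 => u0 u1 u2.
by do 3 case/orP=> /eqP->; rewrite ?eqxx //= => _ _.
Qed.

Lemma alt_d (f : col) (s : seq T) y : bicol f s ->
  (forall i, i.+1 < size s -> f (nth y s i) != f (nth y s i.+1)) ->
  forall d i, i + 2 * d < size s -> f (nth y s i) = f (nth y s (i + 2 * d)).
Proof.
move=> bf hd; elim=> [|d IH] i hi; first by rewrite muln0 addn0.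
rewrite (IH i); last lia.
have -> : i + 2 * d.+1 = (i + 2 * d).+2 by lia.
apply: alt2 bf hd _ _; lia.
Qed.

Lemma consec_diff (f : col) (A : {set T}) (t : seq T) y : upath e t ->
  all (fun x => x \in A) t -> proper_on A f ->
  forall i, i.+1 < size t -> f (nth y t i) != f (nth y t i.+1).
Proof.
case: t => [|x s] //; rewrite {1}/upath => /andP[_ ps] tA /proper_onP pf i hi.
rewrite /= in hi.
apply: pf.
- by apply: (allP tA); apply: mem_nth; rewrite /=; lia.
- by apply: (allP tA); apply: mem_nth.
- by move/pathP: ps => /(_ y i hi).
Qed.

Definition PPb := [set t : (2*k).-tuple T | upath e t && (v \in val t) && (index v t < k)].
Definition Badt (t : (2*k).-tuple T) :=
  [set p in E | all (fun x => x \in S) t && bicol (ext p.1 v p.2) t].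
Definition G := [set p : col * 'I_m | ext p.1 v p.2 \in good S].

Lemma card_PPb : #|PPb| <= k * Bn e (2*k).
Proof.
have sub : PPb \subset \bigcup_(j < k) Qset e (2*k) j v.
  apply/subsetP => t; rewrite inE => /andP[/andP[ut vt] ik].
  apply/bigcupP; exists (Ordinal ik) => //.
  by rewrite inE ut /= nth_index.
apply: leq_trans (subset_leq_card sub) _.
apply: leq_trans (card_bigcup_le _ _) _.
have -> : k * Bn e (2*k) = \sum_(j < k) Bn e (2*k).
  by rewrite sum_nat_const card_ord.
apply: leq_sum => j _.
apply: Q_bound => //; [lia | case: j => /= j; lia].
Qed.


Lemma ext_out p : p \in E -> forall x, x \notin S -> ext p.1 v p.2 x = x0.
Proof.
case: p => g c; rewrite inE /= => /andP[gg _] x xS.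
have xv : x != v by apply: contraNneq xS => ->.
rewrite ffunE (negbTE xv); apply: good_out gg _; by rewrite !inE negb_and xS orbT.
Qed.

Lemma Bad_sub : E :\: G \subset \bigcup_(t in PPb) Badt t.
Proof.
apply/subsetP => p /setDP[pE nG].
have nv : ~~ valid S (ext p.1 v p.2).
  apply: contra nG => vl; rewrite inE inE vl /=.
  by apply/forallP => x; apply/implyP => xS; rewrite ext_out.
move: nv; rewrite /valid ext_proper //= => /forallPn[t].
rewrite negb_imply negbK => /andP[/andP[ut tS] bt].
have gg : p.1 \in good S' by move: pE; rewrite inE => /andP[].
have vt : v \in val t.
  apply: contraLR bt => nvt.
  have tS' : all (fun x => x \in S') t.
    apply/allP => x xt; rewrite !inE (allP tS x xt) andbT.
    by apply: contraNneq nvt => <-.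
  have := good_valid gg => /andP[_ /forallP /(_ t)]; rewrite ut tS' /=.
  apply: contra; apply: bicol_eq => x xt; apply: ext_on => //; exact: (allP tS').
have st : size t = 2 * k by rewrite size_tuple.
case: (ltnP (index v t) k) => ik.
  apply/bigcupP; exists t; first by rewrite inE ut vt ik.
  by rewrite inE pE tS bt.
apply/bigcupP; exists (rev_tuple t).
  rewrite inE /= upath_rev // ut mem_rev vt /=.
  have ilt : index v t < size t by rewrite index_mem.
  have urt : uniq (rev t) by rewrite rev_uniq; case/andP: ut.
  have hr : nth v (rev t) (size t - (index v t).+1) = v.
    by rewrite nth_rev; [rewrite (_ : size t - (size t - (index v t).+1).+1 = index v t) ?nth_index //; lia | lia].
  rewrite -[X in index X _]hr index_uniq //; rewrite ?size_rev st in ilt *; lia.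
rewrite inE pE /= all_rev tS /=.
move: bt => /existsP[a /existsP[b /allP h]]; apply/existsP; exists a; apply/existsP; exists b.
by apply/allP => x; rewrite mem_rev => /h.
Qed.


Lemma card_Badt t : t \in PPb ->
  #|Badt t| <= N (S :\: [set x in take (2*k-2) t]).
Proof.
rewrite inE => /andP[/andP[ut vt] ik].
set X := [set x in take (2*k-2) t].
set A := S :\: X.
have st : size t = 2 * k by rewrite size_tuple.
have ut' : uniq t by case/andP: ut.
have vX : v \in X by rewrite inE in_take //; lia.
have AS' : A \subset S'.
  apply/subsetP => x; rewrite !inE => /andP[xX xS]; rewrite xS andbT.
  by apply: contraNneq xX => ->; rewrite -(in_set (fun y => y \in take _ _)).
pose r (p : col * 'I_m) : col := [ffun x => if x \in X then x0 else ext p.1 v p.2 x].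
have rE : forall p x, x \notin X -> r p x = ext p.1 v p.2 x.
  by move=> p x xX; rewrite ffunE (negbTE xX).
rewrite -(card_in_imset (f := r)).
  apply: subset_leq_card; apply/subsetP => _ /imsetP[p + ->].
  rewrite inE => /andP[pE _].
  have gg : p.1 \in good S' by move: pE; rewrite inE => /andP[].
  rewrite inE; apply/andP; split.
    apply: (valid_imp (f := p.1)); last exact: valid_sub AS' (good_valid gg).
    move=> x xA; have xS' := subsetP AS' x xA.
    move: xA; rewrite inE => /andP[xX _]; rewrite rE // ext_on //.
  apply/forallP => x; apply/implyP => xA; rewrite ffunE.
  case: ifP => xX //; rewrite ext_out //.
  by move: xA; rewrite in_setD xX.
move=> p1 p2; rewrite inE => /andP[p1E /andP[tS b1]]; rewrite inE => /andP[p2E /andP[_ b2]] hr.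
apply: ext_inj => //=; apply/ffunP => x.
case xX: (x \in X); last by have := congr1 (fun f : col => f x) hr; rewrite !rE ?xX.
move: xX; rewrite inE => xX.
have xt : x \in val t by exact: mem_take xX.
have ix := index_ltn xX.
set i := index x t in ix.
have [d hd] := half_pick k2 ix.
set y := nth v t (i + 2 * d).
have yl : i + 2 * d < size t by rewrite st; case/andP: hd.
have yX : y \notin X.
  rewrite inE in_take ?mem_nth // /y index_uniq //; case/andP: hd => hd1 _.
  by rewrite -leqNgt.
have xi : x = nth v t i by rewrite /i nth_index.
have ey : ext p1.1 v p1.2 y = ext p2.1 v p2.2 y.
  by have := congr1 (fun f : col => f y) hr; rewrite !rE.
have a1 := alt_d b1 (@consec_diff _ _ _ v ut tS (ext_proper p1E)) yl.
have a2 := alt_d b2 (@consec_diff _ _ _ v ut tS (ext_proper p2E)) yl.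
by rewrite xi a1 a2.
Qed.


Lemma step (b : R) : (0 < b)%R -> D <= m ->
  (b + INR (k * Bn e (2*k)) / b ^ (2*k-3) <= INR m - INR D)%R ->
  (forall A : {set T}, A \subset S' -> #|S'| - #|A| = 2*k-3 ->
      (b ^ (2*k-3) * INR (N A) <= INR (N S'))%R) ->
  (b * INR (N S') <= INR (N S))%R.
Proof.
move=> bpos Dm hb chain.
set q := (b ^ (2*k-3))%R.
have qpos : (0 < q)%R by apply: pow_lt.
set K := INR (k * Bn e (2*k)).
set P := #|PPb|.
set Mx := \max_(t in PPb) #|Badt t|.
have h1 := cardsID G E.
have h2 : #|E :&: G| <= N S.
  rewrite -(card_in_imset (f := fun p => ext p.1 v p.2)); last first.
    by move=> p1 p2 /setIP[p1E _] /setIP[p2E _]; apply: ext_inj.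
  apply: subset_leq_card; apply/subsetP => _ /imsetP[p /setIP[_ pG] ->].
  by move: pG; rewrite inE.
have h3 := cardE.
have h4 : #|E :\: G| <= P * Mx.
  apply: leq_trans (subset_leq_card Bad_sub) _.
  apply: leq_trans (card_bigcup_le _ _) _.
  rewrite -sum_nat_const; apply: leq_sum => t tP.
  rewrite /Mx; apply: (@leq_bigmax_cond _ (fun t => t \in PPb) (fun t => #|Badt t|) t tP).
have h5 : P <= k * Bn e (2*k) := card_PPb.
have h6 : (q * INR (P * Mx) <= INR P * INR (N S'))%R.
  case: (posnP P) => [P0|Ppos].
    by rewrite P0 mul0n /= Rmult_0_r Rmult_0_l; apply: Rle_refl.
  have [t0 t0P Mxe] := eq_bigmax_cond (fun t => #|Badt t|) Ppos.
  rewrite -/Mx in Mxe.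
  rewrite mult_INR Rmult_comm Rmult_assoc; apply: Rmult_le_compat_l; first exact: pos_INR.
  rewrite Rmult_comm Mxe.
  case: (posnP #|Badt t0|) => [B0|Bpos].
    rewrite B0 /= Rmult_0_r; exact: pos_INR.
  have [p pB] : exists p, p \in Badt t0.
    by move: Bpos; rewrite card_gt0 => /set0Pn.
  have tS : all (fun x => x \in S) t0.
    by move: pB; rewrite inE => /andP[_ /andP[]].
  apply: Rle_trans (Rmult_le_compat_l _ _ _ (Rlt_le _ _ qpos) (le_INR _ _ (leP (card_Badt t0P)))) _.
  apply: chain.
    apply/subsetP => x; rewrite !inE => /andP[xX xS]; rewrite xS andbT.
    move: t0P; rewrite inE => /andP[/andP[_ vt] ik].
    apply: contraNneq xX => ->; rewrite in_take //; lia.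
  have ut : uniq t0 by move: t0P; rewrite inE => /andP[/andP[/andP[]]].
  have st : size t0 = 2 * k by rewrite size_tuple.
  have XS : [set x in take (2*k-2) t0] \subset S.
    apply/subsetP => x; rewrite inE => /mem_take xt; exact: (allP tS).
  have cX : #|[set x in take (2*k-2) t0]| = 2*k-2.
    rewrite cardsE; move/card_uniqP: (take_uniq (2*k-2) ut) => ->.
    rewrite size_takel // st; lia.
  have cS := cardsD1 v S; rewrite vS in cS.
  have cXS := subset_leq_card XS.
  rewrite (cardsDS XS); move: cX cS cXS k2; generalize #|S| #|S :\ v| #|[set x in take (2 * k - 2) t0]| => a1 a2 a3; clear; lia.
have E1 : (INR #|E| <= INR (N S) + INR (P * Mx))%R.
  rewrite -plus_INR; apply: le_INR; apply/leP; lia.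
have E2 : (INR (m - D) * INR (N S') <= INR #|E|)%R.
  rewrite -mult_INR; apply: le_INR; apply/leP; lia.
rewrite minus_INR in E2; last by apply/leP.
have E3 : (INR P <= K)%R by apply: le_INR; apply/leP.
have Npos : (0 <= INR (N S'))%R by apply: pos_INR.
have E4 : (INR (P * Mx) <= (K / q) * INR (N S'))%R.
  apply: (Rmult_le_reg_l q) => //.
  apply: Rle_trans h6 _.
  have -> : (q * (K / q * INR (N S')) = K * INR (N S'))%R by field; apply: Rgt_not_eq.
  by apply: Rmult_le_compat_r.
move: hb; rewrite -/q -/K => hb.
set r := (K / q)%R in E4 hb.
nra.
Qed.

End Col.

Section Main.
Variables (T : finType) (e : rel T).
Hypothesis esym : symmetric e.
Hypothesis eirr : irreflexive e.
Variables (k m : nat).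
Hypothesis k2 : 1 < k.
Variable x0 : 'I_m.
Variable b : R.
Hypothesis bpos : (0 < b)%R.
Hypothesis Dm : maxdeg e <= m.
Hypothesis hb : (b + INR (k * Bn e (2*k)) / b ^ (2*k-3) <= INR m - INR (maxdeg e))%R.

Local Notation NN := (N e k x0).

Lemma chain_all n : forall S : {set T}, #|S| <= n -> forall A : {set T}, A \subset S ->
  (b ^ (#|S| - #|A|) * INR (NN A) <= INR (NN S))%R.
Proof.
elim: n => [|n IH] S cS A AS.
  have S0 : S = set0 by apply/cards0_eq; lia.
  have A0 : A = set0 by apply/eqP; rewrite -subset0 -S0.
  by rewrite S0 A0 subnn /= Rmult_1_l; apply: Rle_refl.
case: (eqVneq A S) => [->|AnS].
  by rewrite subnn /= Rmult_1_l; apply: Rle_refl.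
have [v vS vA] : exists2 v, v \in S & v \notin A.
  have : A \proper S by rewrite properEneq AnS AS.
  by case/properP => _ [v vS vA]; exists v.
have AS' : A \subset S :\ v.
  apply/subsetP => x xA; rewrite !inE (subsetP AS x xA) andbT.
  by apply: contraNneq vA => <-.
have cS' := cardsD1 v S; rewrite vS in cS'.
have cA := subset_leq_card AS'.
have cS'n : #|S :\ v| <= n by lia.
have IH1 := IH (S :\ v) cS'n A AS'.
have st := step esym eirr k2 (x0 := x0) vS bpos Dm hb
   (fun A' sA' e0 => eq_ind _ (fun j => (b ^ j * INR (NN A') <= INR (NN (S :\ v)))%R)
        (IH (S :\ v) cS'n A' sA') _ e0).
have -> : #|S| - #|A| = (#|S :\ v| - #|A|).+1 by lia.
rewrite /= Rmult_assoc.
apply: Rle_trans st.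
apply: Rmult_le_compat_l; [lra | exact: IH1].
Qed.

Lemma exists_valid : exists f : {ffun T -> 'I_m}, valid e k setT f.
Proof.
have h := chain_all (leqnn #|[set: T]|) (sub0set [set: T]).
rewrite N0 //= Rmult_1_r in h.
have : (0 < INR (NN setT))%R.
  apply: Rlt_le_trans h; apply: pow_lt bpos.
case: (posnP (NN setT)) => [->|]; first by rewrite /=; lra.
rewrite /N card_gt0 => /set0Pn[f]; rewrite inE => /andP[vf _] _.
by exists f.
Qed.


Lemma valid_star (f : {ffun T -> 'I_m}) : valid e k setT f -> star_k_coloring e k (fun x => f x).
Proof.
move=> /andP[/proper_onP pf /forallP vf]; split.
  by move=> u w euw; apply/eqP; apply: pf; rewrite ?inE.
move=> x s hs hu hp.
set U := undup (map f (x :: s)).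
have hs' : size (x :: s) == 2 * k by apply/eqP.
have := vf (Tuple hs'); rewrite /= /upath hu hp /=.
have -> : all (fun y => y \in [set: T]) s by apply/allP => y; rewrite inE.
rewrite inE /= => nb; rewrite leqNgt; apply: contra nb => hsz.
have hmem : forall y, y \in x :: s -> f y \in U.
  by move=> y ys; rewrite mem_undup; apply: map_f.
move: hmem hsz; case: U => [|a [|b0 [|c r]]] //= hmem hsz.

- by move: (hmem x (mem_head _ _)); rewrite in_nil.
- apply/existsP; exists a; apply/existsP; exists a; apply/allP => y /hmem.
  by rewrite inE orbb.
- apply/existsP; exists a; apply/existsP; exists b0; apply/allP => y /hmem.
  by rewrite !inE.
Qed.

End Main.

Lemma Rpower_ge1 x y : (1 <= x)%R -> (0 <= y)%R -> (1 <= Rpower x y)%R.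
Proof.
move=> hx hy; rewrite -(Rpower_O x); last lra.
by apply: Rle_Rpower.
Qed.

Lemma Rpower_inv_pow x (l : nat) : (0 < x)%R -> (0 < l)%nat ->
  (Rpower x (/ INR l) ^ l = x)%R.
Proof.
move=> hx hl.
have hL : (INR l <> 0)%R by apply: not_0_INR; lia.
rewrite -Rpower_pow; last by rewrite /Rpower; apply: exp_pos.
by rewrite Rpower_mult Rinv_l // Rpower_1.
Qed.

Lemma bound_eq (k D : nat) : (2 <= k)%nat -> (1 <= D)%nat ->
  let L := INR (2 * k - 2) in
  let g := Rpower (L - 1) (/ L) in
  let a := Rpower (INR k * INR D) (/ L) in
  star_bound k D = (L * g / (L - 1) * a * INR D + INR D)%R.
Proof.
move=> k2 D1 L g a.
have L2 : (2 <= L)%R by rewrite /L; apply: (le_INR 2); lia.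
have kpos : (0 < INR k)%R by apply: lt_0_INR; lia.
have Dpos : (0 < INR D)%R by apply: lt_0_INR; lia.
rewrite /star_bound /Cconst -/L.
have -> : (Rpower (L - 1) (/ L - 1) = g / (L - 1))%R.
  rewrite /Rminus Rpower_plus Rpower_Ropp Rpower_1; last lra.
  by rewrite /g /Rdiv.
have -> : (INR (2 * k - 1) / L = 1 + / L)%R.
  have -> : (2 * k - 1 = (2 * k - 2).+1)%nat by lia.
  rewrite S_INR -/L; field; lra.
rewrite Rpower_plus Rpower_1 //.
have -> : (L * (g / (L - 1)) * Rpower (INR k) (/ L) * (INR D * Rpower (INR D) (/ L))
   = L * (g / (L - 1)) * INR D * (Rpower (INR k) (/ L) * Rpower (INR D) (/ L)))%R by ring.
rewrite Rpower_mult_distr // -/a.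
field; lra.
Qed.

Lemma real_part (k D : nat) : (2 <= k)%nat -> (1 <= D)%nat ->
  exists (m : nat) (b : R), (D <= m)%nat /\ (0 < b)%R /\
    (b + INR (k * (D * D.-1 ^ (2*k-2))) / b ^ (2*k-3) <= INR m - INR D)%R /\
    (INR m <= star_bound k D)%R.
Proof.
move=> k2 D1.
have := bound_eq k2 D1; set L := INR (2 * k - 2); set g := Rpower (L - 1) (/ L);
  set a := Rpower (INR k * INR D) (/ L) => hB.
have L2 : (2 <= L)%R by rewrite /L; apply: (le_INR 2); lia.
have kpos : (1 <= INR k)%R by apply: (le_INR 1); lia.
have Dpos : (1 <= INR D)%R by apply: (le_INR 1); lia.
have g1 : (1 <= g)%R by apply: Rpower_ge1; [lra | apply: Rlt_le; apply: Rinv_0_lt_compat; lra].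
have a1 : (1 <= a)%R by apply: Rpower_ge1; [nra | apply: Rlt_le; apply: Rinv_0_lt_compat; lra].
have gl : (g ^ (2 * k - 2) = L - 1)%R by apply: Rpower_inv_pow; [lra | lia].
have al : (a ^ (2 * k - 2) = INR k * INR D)%R by apply: Rpower_inv_pow; [nra | lia].
set C := (L * g / (L - 1))%R in hB.
have C1 : (1 <= C * a)%R.
  have : (1 <= C)%R.
    rewrite /C; apply/(Rmult_le_reg_r (L - 1)); first lra.
    rewrite /Rdiv Rmult_assoc Rinv_l; nra.
  nra.
set x := (C * a * (INR D - 1))%R.
have x0 : (0 <= x)%R by rewrite /x; nra.
have [up1 up2] := archimed x.
have upos : (0 <= up x)%Z.
  apply: le_IZR; lra.
exists (D + Z.to_nat (up x))%nat.
have mE : (INR (D + Z.to_nat (up x)) = INR D + IZR (up x))%R.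
  by rewrite plus_INR [INR (Z.to_nat _)]INR_IZR_INZ ZArith.Znat.Z2Nat.id.
have hm : (INR (D + Z.to_nat (up x)) <= star_bound k D)%R.
  rewrite mE hB -/g -/a -/C.
  have e1 : (C * a * INR D = x + C * a)%R by rewrite /x; ring.
  rewrite e1; lra.
case: (eqVneq D 1) => [D1'|D2].
  exists 1%R; split; first lia.
  split; first lra.
  split; last exact: hm.
  have -> : (D.-1 ^ (2 * k - 2) = 0)%nat.
    have -> : (2 * k - 2 = (2 * k - 3).+1)%nat by lia.
    by rewrite D1'.
  rewrite muln0 muln0 /= /Rdiv Rmult_0_l Rplus_0_r mE.
  have xz : (x = 0)%R.
    have hD : INR D = 1%R by rewrite D1'; reflexivity.
    rewrite /x hD; ring.
  rewrite xz in up1 up2 *.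
  have u0 : (0 < up 0)%Z by apply: lt_IZR; lra.
  have u1 : (1 <= IZR (up 0))%R by apply: IZR_le; lia.
  lra.
have D2' : (2 <= INR D)%R by apply: (le_INR 2); lia.
set B := (INR D - 1)%R.
exists (g * (a * B))%R; split; first lia.
split; first by apply: Rmult_lt_0_compat; [lra | apply: Rmult_lt_0_compat; rewrite /B; lra].
split; last exact: hm.
rewrite mE.
have -> : (INR (k * (D * D.-1 ^ (2 * k - 2))) = (a * B) ^ (2 * k - 2))%R.
  rewrite Rpow_mult_distr al !mult_INR pow_INR /B.
  have -> : (INR D.-1 = INR D - 1)%R by rewrite -subn1 minus_INR /=; [lra | apply/leP].
  ring.
have e23 : (2 * k - 2 = (2 * k - 3).+1)%nat by lia.
rewrite e23 /=; rewrite e23 /= in gl.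
set G := (g ^ (2 * k - 3))%R in gl *.
set P := (a * B)%R.
have Ppos : (0 < P)%R by apply: Rmult_lt_0_compat; rewrite /B; lra.
have Gpos : (0 < G)%R by rewrite /G; apply: pow_lt; lra.
have -> : (P * P ^ (2 * k - 3) / (g * P) ^ (2 * k - 3) = P / G)%R.
  rewrite Rpow_mult_distr -/G; field; split; [lra | apply: pow_nonzero; lra].
have : (g * P + P / G = C * a * B)%R.
  rewrite /C /P.
  have hL : L = (g * G + 1)%R by lra.
  have gG : (0 < g * G)%R by apply: Rmult_lt_0_compat; lra.
  rewrite hL; field; lra.
rewrite /x -/B in up1 up2 *; lra.
Qed.

Theorem theorem10 (k : nat) (T : finType) (e : rel T) :
  (2 <= k)%N -> symmetric e -> irreflexive e -> (1 <= maxdeg e)%N ->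
  exists (m : nat) (c : T -> 'I_m),
    star_k_coloring e k c /\ (INR m <= star_bound k (maxdeg e))%R.
Proof.
move=> k2 esym eirr D1.
have [m [b [Dm [bpos [hb hm]]]]] := real_part k2 D1.
have mpos : (0 < m)%N by apply: leq_trans D1 Dm.
pose x0 : 'I_m := Ordinal mpos.
have hb' : (b + INR (k * Bn e (2*k)) / b ^ (2*k-3) <= INR m - INR (maxdeg e))%R.
  have -> : Bn e (2 * k) = maxdeg e * (maxdeg e).-1 ^ (2 * k - 2).
    by rewrite /Bn; have -> : (2 * k <= 1) = false by apply/negbTE; rewrite -ltnNge; lia.
  exact: hb.
have [f vf] := exists_valid esym eirr k2 x0 bpos Dm hb'.
exists m, (fun x => f x); split; last exact: hm.
exact: valid_star vf.
Qed.
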